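(* For every integer $T=3k+1$ with $k\ge 2$ and every $\sigma\in\mathfrak S_3$, the vector $\sigma c$ with $c=[2,-1,-1,-1,2,2]$ defines a facet of $P^T$.
   Context: For an integer $T\ge 2$, let $\Omega_T$ be the set of words $w=s_1s_2\cdots s_T$ over $\{1,2,3\}$ with $s_l\neq s_{l+1}$ for $l=1,\dots,T-1$. For $w\in\Omega_T$ and an ordered pair $ij$, $i\neq j$, let $x_{ij}(w)$ be the number of indices $1\le l\le T-1$ with $s_ls_{l+1}=ij$. Vectors of $\mathbb R^6$ are indexed in the order $[x_{12},x_{13},x_{21},x_{23},x_{31},x_{32}]$. Let $a_w=[x_{12}(w),\dots,x_{32}(w)]$ and $P^T=\mathrm{conv}\{a_w:w\in\Omega_T\}$. $\mathfrak S_3$ acts on $\mathbb R^6$ by $(\sigma c)_{ij}=c_{\sigma(i)\sigma(j)}$. A vector $c$ defines a facet of $P^T$ if $c\cdot a_w\ge0$ for all $w\in\Omega_T$ and $\{x\in P^T: c\cdot x=0\}$ is a facet of $P^T$. *)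

(* Defs.v *)
From HB Require Import structures.
From mathcomp Require Import all_boot all_order all_algebra all_fingroup.
Set Implicit Arguments. Unset Strict Implicit. Unset Printing Implicit Defensive.
Import Order.TTheory GRing.Theory Num.Theory.
Local Open Scope ring_scope.

(* Letters 1,2,3 are encoded as the ordinals 0,1,2 of 'I_3.
   Coordinates of R^6 are indexed by 'I_6 in the order
   [x12, x13, x21, x23, x31, x32]. *)

Definition pfst (k : 'I_6) : 'I_3 :=
  inord (match val k with 0 | 1 => 0 | 2 | 3 => 1 | _ => 2 end)%N.
Definition psnd (k : 'I_6) : 'I_3 :=
  inord (match val k with 0 => 1 | 1 => 2 | 2 => 0 | 3 => 2 | 4 => 0 | _ => 1 end)%N.
(* inverse of k |-> (pfst k, psnd k) on pairs i <> j *)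
Definition pidx (i j : 'I_3) : 'I_6 :=
  inord (match val i, val j with
         | 0, 1 => 0 | 0, 2 => 1 | 1, 0 => 2 | 1, 2 => 3 | 2, 0 => 4 | _, _ => 5 end)%N.

Definition is_word (T : nat) (w : T.-tuple 'I_3) : bool :=
  [forall l : 'I_T, (l.+1 < T)%N ==> (tnth w l != nth ord0 w l.+1)].

Definition xcount (T : nat) (w : T.-tuple 'I_3) (i j : 'I_3) : nat :=
  count (fun l => (nth ord0 w l == i) && (nth ord0 w l.+1 == j)) (iota 0 T.-1).

Definition avec (R : nzRingType) (T : nat) (w : T.-tuple 'I_3) : 'rV[R]_6 :=
  \row_k (xcount w (pfst k) (psnd k))%:R.

Definition dot (R : nzRingType) (u v : 'rV[R]_6) : R := \sum_k u 0 k * v 0 k.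

Definition inPT (R : realFieldType) (T : nat) (x : 'rV[R]_6) : Prop :=
  exists lam : T.-tuple 'I_3 -> R,
    [/\ forall w, 0 <= lam w,
        forall w, lam w != 0 -> is_word w,
        \sum_w lam w = 1 &
        x = \sum_w lam w *: @avec R T w].

Definition sact (R : nzRingType) (s : 'S_3) (c : 'rV[R]_6) : 'rV[R]_6 :=
  \row_k c 0 (pidx (s (pfst k)) (s (psnd k))).

Definition has_aff_indep (R : fieldType) (S : 'rV[R]_6 -> Prop) (n : nat) : Prop :=
  exists p : 'I_n.+1 -> 'rV[R]_6,
    (forall i, S (p i)) /\
    \rank (\matrix_(i < n) (p (lift ord0 i) - p ord0)) = n.

Definition affdim (R : fieldType) (S : 'rV[R]_6 -> Prop) (d : int) : Prop :=
  (d = (-1)%R /\ forall x, ~ S x) \/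
  (exists n : nat, d = n%:Z /\ has_aff_indep S n /\ ~ has_aff_indep S n.+1).

Definition defines_facet (R : realFieldType) (T : nat) (c : 'rV[R]_6) : Prop :=
  (forall w : T.-tuple 'I_3, is_word w -> 0 <= dot c (@avec R T w)) /\
  exists d : int,
    affdim (@inPT R T) d /\
    affdim (fun x => @inPT R T x /\ dot c x = 0) (d - 1).

Definition c8 (R : nzRingType) : 'rV[R]_6 :=
  \row_k (match val k with 0 => 2 | 4 | 5 => 2 | _ => -1 end).

(* Main.v *)
Require Import Defs.
From HB Require Import structures.
From mathcomp Require Import all_boot all_order all_algebra all_fingroup.
From mathcomp Require Import ring lra zify.
Import Order.TTheory GRing.Theory Num.Theory.
Set Implicit Arguments. Unset Strict Implicit. Unset Printing Implicit Defensive.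
Local Open Scope ring_scope.

Definition O0 : 'I_3 := ord0.
Definition O1 : 'I_3 := @Ordinal 3 1 isT.
Definition O2 : 'I_3 := @Ordinal 3 2 isT.
Definition pf (k : 'I_6) : 'I_3 := nth O0 [:: O0; O0; O1; O1; O2; O2] k.
Definition ps (k : 'I_6) : 'I_3 := nth O0 [:: O1; O2; O0; O2; O0; O1] k.
Lemma pfstE k : pfst k = pf k.
Proof. apply: val_inj; case: k => [[|[|[|[|[|[|//]]]]]] ?]; rewrite /= inordK //. Qed.
Lemma psndE k : psnd k = ps k.
Proof. apply: val_inj; case: k => [[|[|[|[|[|[|//]]]]]] ?]; rewrite /= inordK //. Qed.

Lemma pidx_fst (i j : 'I_3) : i != j -> pfst (pidx i j) = i.
Proof.
rewrite pfstE; case: i => [[|[|[|//]]] hi]; case: j => [[|[|[|//]]] hj] //= _;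
 apply: val_inj; rewrite /pf /pidx /= inordK //.
Qed.
Lemma pidx_snd (i j : 'I_3) : i != j -> psnd (pidx i j) = j.
Proof.
rewrite psndE; case: i => [[|[|[|//]]] hi]; case: j => [[|[|[|//]]] hj] //= _;
 apply: val_inj; rewrite /ps /pidx /= inordK //.
Qed.
Lemma pfst_neq k : pfst k != psnd k.
Proof. rewrite pfstE psndE; case: k => [[|[|[|[|[|[|//]]]]]] ?] //. Qed.
Lemma pidx_fs k : pidx (pfst k) (psnd k) = k.
Proof.
rewrite pfstE psndE; apply: val_inj.
case: k => [[|[|[|[|[|[|//]]]]]] ?]; rewrite /pidx /= inordK //.
Qed.

Definition pim (s : 'S_3) (k : 'I_6) : 'I_6 := pidx (s (pfst k)) (s (psnd k)).

Lemma pim_fst s k : pfst (pim s k) = s (pfst k).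
Proof. by rewrite /pim pidx_fst // (inj_eq perm_inj) pfst_neq. Qed.
Lemma pim_snd s k : psnd (pim s k) = s (psnd k).
Proof. by rewrite /pim pidx_snd // (inj_eq perm_inj) pfst_neq. Qed.
Lemma pim_inj s : injective (pim s).
Proof.
move=> k1 k2 e.
have h1 := pim_fst s k1; have h2 := pim_snd s k1.
rewrite e pim_fst in h1; rewrite e pim_snd in h2.
by rewrite -(pidx_fs k1) -(pidx_fs k2) (perm_inj h1) (perm_inj h2).
Qed.
Lemma pimK s k : pim s (pim s^-1 k) = k.
Proof. by rewrite /pim pim_fst pim_snd !permKV pidx_fs. Qed.

Definition pairs (s : seq 'I_3) : seq ('I_3 * 'I_3) :=
  [seq (nth ord0 s l, nth ord0 s l.+1) | l <- iota 0 (size s).-1].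

Lemma pairs_cons2 a b s : pairs [:: a, b & s] = (a, b) :: pairs (b :: s).
Proof.
rewrite /pairs /= -[iota 1 _]/(iota (1 + 0) _) iotaDl -map_comp.
congr (_ :: _); apply: eq_map => l /=; by rewrite add1n.
Qed.
Lemma pairs1 a : pairs [:: a] = [::]. Proof. by []. Qed.
Lemma pairs0 : pairs [::] = [::]. Proof. by []. Qed.
Lemma size_pairs s : size (pairs s) = (size s).-1.
Proof. by rewrite size_map size_iota. Qed.

Lemma pairs_map (f : 'I_3 -> 'I_3) s :
  pairs (map f s) = map (fun p => (f p.1, f p.2)) (pairs s).
Proof.
elim: s => [|a s IH] //; case: s IH => [|b s] IH //.
rewrite [map f _]/= !pairs_cons2 /=; by rewrite -IH.
Qed.

Lemma xcountE T (w : T.-tuple 'I_3) i j :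
  xcount w i j = count (fun p => (p.1 == i) && (p.2 == j)) (pairs w).
Proof. by rewrite /xcount count_map size_tuple. Qed.

Definition nrep (s : seq 'I_3) := all (fun p => p.1 != p.2) (pairs s).

Lemma is_wordE T (w : T.-tuple 'I_3) : is_word w = nrep w.
Proof.
rewrite /is_word /nrep /pairs all_map size_tuple.
apply/forallP/allP => [H l | H l].
- rewrite mem_iota add0n => hl.
  have hlT : (l < T)%N by lia.
  have := H (Ordinal hlT); rewrite (tnth_nth ord0) /=.
  move/implyP; apply; lia.
- apply/implyP => hl; rewrite (tnth_nth ord0).
  have := H l; rewrite mem_iota /=; apply; lia.
Qed.

Lemma nrep_map (f : 'I_3 -> 'I_3) s : injective f -> nrep s -> nrep (map f s).
Proof.
move=> fi /allP H; apply/allP => p; rewrite pairs_map => /mapP [q hq ->] /=.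
by rewrite (inj_eq fi); apply: H.
Qed.

Definition dot_pair (R : nzRingType) (d : 'rV[R]_6) (p : 'I_3 * 'I_3) : R :=
  \sum_k d 0 k * ((p.1 == pfst k) && (p.2 == psnd k))%:R.

Lemma dot_avec (R : nzRingType) T (d : 'rV[R]_6) (w : T.-tuple 'I_3) :
  dot d (avec R w) = \sum_(p <- pairs w) dot_pair d p.
Proof.
rewrite /dot /avec; under eq_bigr do rewrite mxE xcountE.
elim: (pairs w) => [|p ps IH].
  by rewrite big_nil big1 // => k _; rewrite /= mulr0.
rewrite big_cons -IH /dot_pair -big_split /=; apply: eq_bigr => k _.
rewrite natrD mulrDr addrC; congr (_ + _).
Qed.

Definition gd (p : 'I_3 * 'I_3) : bool := ((p.1 == O0) && (p.2 == O1)) || (p.1 == O2).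
Definition psi (a : 'I_3) : nat := nth 0%N [:: 1; 0; 2]%N a.

Lemma psi_le2 a : (psi a <= 2)%N.
Proof. by case: a => [[|[|[|//]]] ?]. Qed.

Lemma gd_pot (a b : 'I_3) : a != b -> (1 + psi a <= 3 * gd (a, b) + psi b)%N.
Proof. by case: a => [[|[|[|//]]] ?]; case: b => [[|[|[|//]]] ?]. Qed.

Lemma pot_ineq (s : seq 'I_3) : nrep s ->
  ((size s).-1 + psi (head O0 s) <= 3 * count gd (pairs s) + psi (last O0 s))%N.
Proof.
elim: s => [|a s IH] //; case: s IH => [|b s] IH //.
rewrite /nrep pairs_cons2; set P := pairs (b :: s).
move=> /= /andP [hab hr].
have := IH hr; have := gd_pot hab; rewrite /= -/P; lia.
Qed.

Lemma dot_pair_c8 (R : comNzRingType) (a b : 'I_3) : a != b ->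
  dot_pair (c8 R) (a, b) = 3 * (gd (a, b))%:R - 1.
Proof.
rewrite /dot_pair; under eq_bigr do rewrite pfstE psndE mxE.
rewrite !big_ord_recr big_ord0 /=.
case: a => [[|[|[|//]]] ?]; case: b => [[|[|[|//]]] ?] //= _; ring.
Qed.

Lemma dot_pair_1 (R : comNzRingType) (a b : 'I_3) : a != b ->
  dot_pair (const_mx 1 : 'rV[R]_6) (a, b) = 1.
Proof.
rewrite /dot_pair; under eq_bigr do rewrite pfstE psndE mxE.
rewrite !big_ord_recr big_ord0 /=.
case: a => [[|[|[|//]]] ?]; case: b => [[|[|[|//]]] ?] //= _; ring.
Qed.

Lemma dot_c8_word (R : comNzRingType) T (w : T.-tuple 'I_3) : is_word w ->
  dot (c8 R) (avec R w) = 3 * (count gd (pairs w))%:R - (T.-1)%:R.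
Proof.
rewrite is_wordE dot_avec /nrep.
have -> : T.-1 = size (pairs w) by rewrite size_pairs size_tuple.
elim: (pairs w) => [|[a b] ps IH] /=; first by rewrite big_nil => _; ring.
move=> /andP [hab /IH {}IH]; rewrite big_cons IH dot_pair_c8 //.
rewrite natrD -[(size ps).+1]addn1 natrD; ring.
Qed.

Lemma dot_1_word (R : comNzRingType) T (w : T.-tuple 'I_3) : is_word w ->
  dot (const_mx 1) (avec R w) = (T.-1)%:R.
Proof.
rewrite is_wordE dot_avec /nrep.
have -> : T.-1 = size (pairs w) by rewrite size_pairs size_tuple.
elim: (pairs w) => [|[a b] ps IH] /=; first by rewrite big_nil.
move=> /andP [hab /IH {}IH]; rewrite big_cons IH dot_pair_1 //.
by rewrite -[(size ps).+1]addn1 natrD addrC.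
Qed.

Lemma c8_nonneg (R : realFieldType) k (w : (3 * k + 1).-tuple 'I_3) : is_word w ->
  0 <= dot (c8 R) (avec R w).
Proof.
move=> hw; rewrite dot_c8_word //.
have := pot_ineq (_ : nrep w); rewrite -is_wordE => /(_ hw).
rewrite size_tuple => h; have := psi_le2 (last O0 w).
have -> : ((3 * k + 1).-1 = 3 * k)%N by lia.
move=> h2; rewrite subr_ge0 -natrM ler_nat; lia.
Qed.

Lemma sact_avec (R : nzRingType) (s : 'S_3) T (w : T.-tuple 'I_3) :
  sact s (avec R w) = avec R (map_tuple (s^-1)%g w).
Proof.
apply/rowP => k; rewrite !mxE !xcountE /= pairs_map count_map.
congr (_%:R); apply: eq_count => p /=.
rewrite -[pidx _ _]/(pim s k) pim_fst pim_snd.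
by rewrite !(canF_eq (permKV s)).
Qed.

Lemma dot_sact (R : nzRingType) (s : 'S_3) (d x : 'rV[R]_6) :
  dot (sact s d) (sact s x) = dot d x.
Proof.
rewrite /dot; under eq_bigr do rewrite !mxE.
by rewrite [RHS](reindex_inj (@pim_inj s)).
Qed.

Lemma is_word_map T (w : T.-tuple 'I_3) (f : 'I_3 -> 'I_3) :
  injective f -> is_word w -> is_word (map_tuple f w).
Proof. by move=> fi; rewrite !is_wordE /=; apply: nrep_map. Qed.

Lemma inPT_vertex (R : realFieldType) T (w : T.-tuple 'I_3) :
  is_word w -> inPT T (avec R w).
Proof.
move=> hw; exists (fun w' => (w' == w)%:R); split.
- by move=> w'; rewrite ler0n.
- move=> w'; have [-> //|_] := eqVneq w' w; by rewrite /= eqxx.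
- by rewrite (bigD1 w) //= eqxx big1 ?addr0 // => w' /negbTE ->.
- rewrite (bigD1 w) //= eqxx scale1r big1 ?addr0 // => w' /negbTE ->.
  by rewrite scale0r.
Qed.

Lemma inPT_dot (R : realFieldType) T (x d : 'rV[R]_6) (v : R) :
  inPT T x -> (forall w : T.-tuple 'I_3, is_word w -> dot d (avec R w) = v) ->
  dot d x = v.
Proof.
case=> lam [h0 hw hs ->] hd.
have -> : dot d (\sum_w lam w *: avec R w) = \sum_w lam w * dot d (avec R w).
  rewrite /dot; under eq_bigr do rewrite summxE mulr_sumr.
  rewrite exchange_big; apply: eq_bigr => w _; rewrite mulr_sumr.
  by apply: eq_bigr => k _; rewrite mxE mulrCA.
rewrite -[v]mul1r -hs mulr_suml; apply: eq_bigr => w _.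
by have [->|/hw /hd ->] := eqVneq (lam w) 0; rewrite ?mul0r.
Qed.

Lemma rank_ub (R : fieldType) (m n p : nat) (M : 'M[R]_(m, n)) (N : 'M_(n, p))
  (N' : 'M_(p, n)) : M *m N = 0 -> N' *m N = 1%:M -> (\rank M + p <= n)%N.
Proof.
move=> /mulmx0_rank_max h e; apply: leq_trans h; rewrite leq_add2l.
by rewrite -{1}(mxrank1 R p) -e mxrankM_maxr.
Qed.

Lemma diff_dot (R : comNzRingType) (x y d : 'rV[R]_6) :
  \sum_k (x - y) 0 k * d 0 k = dot d x - dot d y.
Proof.
rewrite /dot -sumrB; apply: eq_bigr => k _; rewrite !mxE.
by rewrite mulrBl ![_ * d 0 k]mulrC.
Qed.

Lemma sum_delta2 (R : nzRingType) (g b : 'I_6) (u v : R) (F : 'I_6 -> R) :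
  \sum_k (u * (k == g)%:R + v * (k == b)%:R) * F k = u * F g + v * F b.
Proof.
under eq_bigr do rewrite mulrDl; rewrite big_split /=.
rewrite (bigD1 g) //= eqxx mulr1 big1 ?addr0; last first.
  by move=> k /negbTE ->; rewrite mulr0 mul0r.
rewrite (bigD1 b) //= eqxx mulr1 big1 ?addr0 //.
by move=> k /negbTE ->; rewrite mulr0 mul0r.
Qed.

Lemma MN0 (R : comNzRingType) n (p : 'I_n.+1 -> 'rV[R]_6) q (D : 'I_q -> 'rV[R]_6) :
  (forall i j, dot (D j) (p i) = dot (D j) (p ord0)) ->
  (\matrix_(i < n) (p (lift ord0 i) - p ord0)) *m (\matrix_(k < 6, j < q) D j 0 k) = 0.
Proof.
move=> h; apply/matrixP => i j; rewrite !mxE.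
transitivity (\sum_k (p (lift ord0 i) - p ord0) 0 k * D j 0 k).
  by apply: eq_bigr => k _; rewrite !mxE.
by rewrite diff_dot h subrr.
Qed.

Lemma ub_P (R : realFieldType) k : ~ has_aff_indep (@inPT R (3 * k + 1)) 6.
Proof.
case=> p [hp hr].
pose D := fun j : 'I_1 => (const_mx 1 : 'rV[R]_6).
have h1 : forall x : 'rV[R]_6, inPT (3 * k + 1) x -> dot (const_mx 1) x = ((3 * k + 1).-1)%:R.
  move=> x hx; have := @inPT_dot R _ x (const_mx 1) _ hx. apply.
  by move=> w hw; rewrite dot_1_word.
have := @rank_ub R 6 6 1 _ _ (\matrix_(j < 1, k0 < 6) (1 * (k0 == ord0)%:R + 0 * (k0 == ord0)%:R))
   (MN0 (D := D) (fun i j => etrans (h1 _ (hp i)) (esym (h1 _ (hp ord0))))).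
rewrite hr => H; suff: (6 + 1 <= 6)%N by []; apply: H.
apply/matrixP => i j; rewrite !mxE.
under eq_bigr do rewrite !mxE.
by rewrite sum_delta2 /D !ord1 eqxx mul1r mul0r addr0.
Qed.

Lemma sactE (R : nzRingType) s (d : 'rV[R]_6) k : sact s d 0 k = d 0 (pim s k).
Proof. by rewrite mxE. Qed.

Lemma ub_F (R : realFieldType) k (s : 'S_3) :
  ~ has_aff_indep (fun x => @inPT R (3 * k + 1) x /\ dot (sact s (c8 R)) x = 0) 5.
Proof.
case=> p [hp hr].
pose D := fun j : 'I_2 => if j == ord0 then (const_mx 1 : 'rV[R]_6) else sact s (c8 R).
have hD : forall i j, dot (D j) (p i) = dot (D j) (p ord0).
  move=> i j; rewrite /D; case: (j == ord0).
    have h1 : forall x : 'rV[R]_6, inPT (3 * k + 1) x ->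
        dot (const_mx 1) x = ((3 * k + 1).-1)%:R.
      move=> x hx; have := @inPT_dot R _ x (const_mx 1) _ hx. apply.
      by move=> w hw; rewrite dot_1_word.
    by rewrite (h1 _ (hp i).1) (h1 _ (hp ord0).1).
  by rewrite (hp i).2 (hp ord0).2.
pose g := pim s^-1 ord0.
pose b := pim s^-1 (@Ordinal 6 1 isT).
pose al := fun j : 'I_2 => (3 : R)^-1.
pose be := fun j : 'I_2 => if j == ord0 then 2 / 3 else - (3 : R)^-1.
have := @rank_ub R 5 6 2 _ _ (\matrix_(j < 2, k0 < 6) (al j * (k0 == g)%:R + be j * (k0 == b)%:R))
   (MN0 hD).
rewrite hr => H; suff: (5 + 2 <= 6)%N by []; apply: H.
apply/matrixP => i j; rewrite !mxE.
under eq_bigr do rewrite !mxE.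
rewrite sum_delta2 /D /al /be.
have hg : sact s (c8 R) 0 g = 2 by rewrite sactE /g pimK mxE.
have hb : sact s (c8 R) 0 b = -1 by rewrite sactE /b pimK mxE.
have h3 : (3 : R) != 0 by rewrite pnatr_eq0.
case: i => [[|[|//]] ?]; case: j => [[|[|//]] ?]; by rewrite /= ?hg ?hb ?mxE /=; field.
Qed.

Fixpoint rep (m : nat) (t : seq 'I_3) : seq 'I_3 :=
  if m is m'.+1 then [:: O1, O0, O2 & rep m' t] else t.

Lemma rep_head m s : exists s', rep m (O1 :: s) = O1 :: s'.
Proof. by case: m => [|m] /=; eexists. Qed.

Lemma size_rep m t : size (rep m t) = (3 * m + size t)%N.
Proof. elim: m => [|m IH] //=; rewrite IH; lia. Qed.

Lemma count_rep (P : pred ('I_3 * 'I_3)) m s :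
  count P (pairs (rep m (O1 :: s))) =
  (m * (P (O1, O0) + P (O0, O2) + P (O2, O1)) + count P (pairs (O1 :: s)))%N.
Proof.
elim: m => [|m IH] //.
have [s' e] := rep_head m s.
rewrite [rep _.+1 _]/= e !pairs_cons2 -e; set Q := pairs _; rewrite /= -/Q IH; lia.
Qed.

Lemma nrep_count s : nrep s = (count (fun p => p.1 == p.2) (pairs s) == 0%N).
Proof. rewrite /nrep; elim: (pairs s) => //= p ps ->; by case: eqP. Qed.

Definition mkw k (t : seq 'I_3) : (3 * k + 1).-tuple 'I_3 :=
  insubd (nseq_tuple (3 * k + 1) O0) (rep (k - 2) t).

Lemma mkwE k t : (2 <= k)%N -> size t = 7%N -> val (mkw k t) = rep (k - 2) t.
Proof.
move=> hk ht; rewrite /mkw insubdK // unfold_in size_rep ht; apply/eqP; lia.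
Qed.

Definition cnt (t : seq 'I_3) (j : 'I_6) : nat :=
  count (fun p => (p.1 == pf j) && (p.2 == ps j)) (pairs t).

Definition Uv (j : 'I_6) : nat :=
  (((O1 == pf j) && (O0 == ps j)) + ((O0 == pf j) && (O2 == ps j)) +
   ((O2 == pf j) && (O1 == ps j)))%N.

Lemma avec_mkw (R : nzRingType) k s (j : 'I_6) : (2 <= k)%N -> size s = 6%N ->
  avec R (mkw k (O1 :: s)) 0 j = ((k - 2) * Uv j + cnt (O1 :: s) j)%:R.
Proof.
move=> hk hs; rewrite mxE xcountE mkwE //= ?hs // pfstE psndE count_rep.
by [].
Qed.

Lemma word_mkw k s : (2 <= k)%N -> size s = 6%N -> nrep (O1 :: s) ->
  is_word (mkw k (O1 :: s)).
Proof.
move=> hk hs; rewrite is_wordE mkwE /= ?hs // !nrep_count count_rep /=.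
by move/eqP ->; rewrite muln0.
Qed.

Definition tl (i : nat) : seq 'I_3 :=
  nth [::] [:: [:: O0; O1; O0; O1; O0; O2];
               [:: O0; O1; O0; O2; O0; O2];
               [:: O0; O1; O0; O2; O1; O0];
               [:: O0; O1; O0; O2; O1; O2];
               [:: O0; O2; O1; O0; O2; O1];
               [:: O0; O1; O0; O1; O0; O1]] i.

Definition Dz n (i : 'I_n) (k : 'I_6) : int :=
  (cnt (O1 :: tl (lift ord0 i)) k)%:Z - (cnt (O1 :: tl 0) k)%:Z.

Definition Bz5 (k : 'I_6) (j : 'I_5) : int :=
  nth 0 (nth [::] [:: [:: 0; -1; 0; 0; 0]; [:: 0; -1; 0; 0; -1]; [:: 0; 1; 0; -1; -1];
                     [:: 0; 0; 1; -1; -1]; [:: 1; 1; 0; -1; 0]; [:: 0; 0; 0; 0; 0]] k) j.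
Definition Bz4 (k : 'I_6) (j : 'I_4) : int :=
  nth 0 (nth [::] [:: [:: 0; -1; 0; 0]; [:: 0; -1; -1; 1]; [:: 0; 1; -1; 0];
                     [:: 0; 0; 0; 0]; [:: 1; 1; 0; -1]; [:: 0; 0; 0; 0]] k) j.

Lemma chk5 (i j : 'I_5) : \sum_(k < 6) Dz i k * Bz5 k j = (i == j)%:R.
Proof.
rewrite !big_ord_recr big_ord0.
case: i => [[|[|[|[|[|//]]]]] ?]; case: j => [[|[|[|[|[|//]]]]] ?];
  vm_compute; reflexivity.
Qed.

Lemma chk4 (i j : 'I_4) : \sum_(k < 6) Dz i k * Bz4 k j = (i == j)%:R.
Proof.
rewrite !big_ord_recr big_ord0.
case: i => [[|[|[|[|//]]]] ?]; case: j => [[|[|[|[|//]]]] ?];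
  vm_compute; reflexivity.
Qed.

Lemma rank_tab (R : realFieldType) n (pi : 'I_6 -> 'I_6) (pii : injective pi)
  (D : 'I_n -> 'I_6 -> int) (B : 'I_6 -> 'I_n -> int) :
  (forall i j, \sum_(k < 6) D i k * B k j = (i == j)%:R) ->
  \rank (\matrix_(i < n, k < 6) ((D i (pi k))%:~R : R)) = n.
Proof.
move=> h; apply/eqP; rewrite eqn_leq rank_leq_row /=.
rewrite -{1}(mxrank1 R n).
have e : (\matrix_(i < n, k < 6) ((D i (pi k))%:~R : R)) *m
         (\matrix_(k < 6, j < n) ((B (pi k) j)%:~R : R)) = 1%:M.
  apply/matrixP => i j; rewrite !mxE.
  under eq_bigr do rewrite !mxE -intrM.
  rewrite -rmorph_sum /=.
  rewrite (_ : \sum_k _ = \sum_(k < 6) D i k * B k j); first by rewrite h rmorph_nat.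
  by rewrite [RHS](reindex_inj pii).
by rewrite -e mxrankM_maxl.
Qed.

Lemma tl_size (i : 'I_6) : size (tl i) = 6%N.
Proof. by case: i => [[|[|[|[|[|[|//]]]]]] ?]. Qed.
Lemma tl_nrep (i : 'I_6) : nrep (O1 :: tl i).
Proof. by case: i => [[|[|[|[|[|[|//]]]]]] ?]; vm_compute. Qed.

Lemma diff_entry (R : nzRingType) k (hk : (2 <= k)%N) (a b : nat) (ha : (a < 6)%N)
  (hb : (b < 6)%N) (j : 'I_6) :
  (xcount (mkw k (O1 :: tl a)) (pfst j) (psnd j))%:R -
  (xcount (mkw k (O1 :: tl b)) (pfst j) (psnd j))%:R =
  ((cnt (O1 :: tl a) j)%:Z - (cnt (O1 :: tl b) j)%:Z)%:~R :> R.
Proof.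
have e : forall w : (3 * k + 1).-tuple 'I_3,
  (xcount w (pfst j) (psnd j))%:R = avec R w 0 j by move=> w; rewrite mxE.
rewrite !e.
have sa : size (tl a) = 6%N := tl_size (Ordinal ha).
have sb : size (tl b) = 6%N := tl_size (Ordinal hb).
rewrite !avec_mkw //.
rewrite rmorphB /= !natrD.
rewrite -[(Posz (cnt _ _))%:~R]/((cnt (O1 :: tl a) j)%:R).
rewrite -[(Posz (cnt (O1 :: tl b) j))%:~R]/((cnt (O1 :: tl b) j)%:R).
by rewrite opprD addrACA subrr add0r.
Qed.

Lemma lb_P (R : realFieldType) k : (2 <= k)%N -> has_aff_indep (@inPT R (3 * k + 1)) 5.
Proof.
move=> hk.
exists (fun i : 'I_6 => avec R (mkw k (O1 :: tl i))); split.
  move=> i; apply: inPT_vertex; apply: word_mkw => //; [exact: tl_size | exact: tl_nrep].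
apply: (etrans _ (@rank_tab R 5 id (@inj_id _) (@Dz 5) Bz5 chk5)); congr mxrank.
apply/matrixP => i j; rewrite !mxE.
by rewrite /Dz; apply: diff_entry.
Qed.

Lemma gd_tl (i : 'I_5) : count gd (pairs (O1 :: tl i)) = 2%N.
Proof. by case: i => [[|[|[|[|[|//]]]]] ?]; vm_compute. Qed.

Lemma face_zero (R : realFieldType) k (hk : (2 <= k)%N) (i : 'I_5) :
  dot (c8 R) (avec R (mkw k (O1 :: tl i))) = 0.
Proof.
have hi : (i < 6)%N by apply: ltn_trans (ltn_ord i) _.
have hw := word_mkw hk (tl_size (Ordinal hi)) (tl_nrep (Ordinal hi)).
rewrite dot_c8_word // mkwE //=; last by rewrite (tl_size (Ordinal hi)).
rewrite count_rep gd_tl /=.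
have -> : ((3 * k + 1).-1 = 3 * ((k - 2) * 1 + 2))%N by lia.
by rewrite natrM subrr.
Qed.

Lemma lb_F (R : realFieldType) k (s : 'S_3) : (2 <= k)%N ->
  has_aff_indep (fun x => @inPT R (3 * k + 1) x /\ dot (sact s (c8 R)) x = 0) 4.
Proof.
move=> hk.
exists (fun i : 'I_5 => sact s (avec R (mkw k (O1 :: tl i)))); split.
  move=> i; have hi : (i < 6)%N by apply: ltn_trans (ltn_ord i) _.
  have hw := word_mkw hk (tl_size (Ordinal hi)) (tl_nrep (Ordinal hi)).
  split.
    rewrite sact_avec; apply: inPT_vertex; apply: is_word_map => //; exact: perm_inj.
  by rewrite dot_sact face_zero.
apply: (etrans _ (@rank_tab R 4 (pim s) (@pim_inj s) (@Dz 4) Bz4 chk4)); congr mxrank.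
apply/matrixP => i j; rewrite !mxE.
rewrite /Dz; apply: diff_entry => //.
by apply: ltn_trans (ltn_ord (lift ord0 i)) _.
Qed.

Theorem proposition8 (R : realFieldType) (k : nat) (hk : (2 <= k)%N) (s : 'S_3) :
  @defines_facet R (3 * k + 1) (sact s (@c8 R)).
Proof.
split.
  move=> w hw.
  have e : avec R w = sact s (avec R (map_tuple s w)).
    rewrite sact_avec; congr (avec R _); apply: val_inj => /=.
    by rewrite -map_comp (eq_map (permK s)) map_id.
  rewrite e dot_sact; apply: c8_nonneg; apply: is_word_map => //; exact: perm_inj.
exists 5; split.
  right; exists 5%N; split => //; split; [exact: lb_P | exact: ub_P].
right; exists 4%N; split => //; split; [exact: lb_F | exact: ub_F].
Qed.
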